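(* Assume the Standing Setting. Let $\phi\colon\mathbb{R}^{\mathfrak d}\times[a,b]^d\to\mathbb{R}$ be locally bounded and measurable and assume that for all $r\in(0,\infty)$ $$\sup_{\theta,\vartheta\in\mathbb{R}^{\mathfrak d},\ \|\theta\|+\|\vartheta\|\le r,\ \theta\ne\vartheta}\ \sup_{x\in[a,b]^d}\frac{|\phi(\theta,x)-\phi(\vartheta,x)|}{\|\theta-\vartheta\|}<\infty.$$ Then (i) the map $\mathbb{R}^{\mathfrak d}\ni\theta\mapsto\int_{[a,b]^d}\phi(\theta,x)p(x)\,\lambda(\mathrm{d}x)\in\mathbb{R}$ is locally Lipschitz continuous, and (ii) for every $i\in\{1,\dots,H\}$ the map $\{\vartheta\in\mathbb{R}^{\mathfrak d}\colon i\notin\mathbf{D}^\vartheta\}\ni\theta\mapsto\int_{I_i^\theta}\phi(\theta,x)p(x)\,\lambda(\mathrm{d}x)\in\mathbb{R}$ is locally Lipschitz continuous.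
   Context: Standing Setting: Let $d,H,\mathfrak d\in\mathbb{N}$ with $\mathfrak d=dH+2H+1$, let $a\in\mathbb{R}$, $b\in(a,\infty)$, $f\in C([a,b]^d,\mathbb{R})$, and let $p\colon[a,b]^d\to[0,\infty)$ be bounded and measurable. Let $\lambda$ be Lebesgue measure on $\mathbb{R}^d$ and $\|\cdot\|$ the Euclidean norm. For $\theta=(\theta_1,\dots,\theta_{\mathfrak d})\in\mathbb{R}^{\mathfrak d}$, $i\in\{1,\dots,H\}$, $j\in\{1,\dots,d\}$ write $w^\theta_{i,j}=\theta_{(i-1)d+j}$, $b^\theta_i=\theta_{Hd+i}$, $v^\theta_i=\theta_{H(d+1)+i}$, $c^\theta=\theta_{\mathfrak d}$. Define $\mathcal N^\theta(x)=c^\theta+\sum_{i=1}^H v^\theta_i\max\{b^\theta_i+\sum_{j=1}^d w^\theta_{i,j}x_j,0\}$ for $x\in\mathbb{R}^d$ and the risk $\mathcal L(\theta)=\int_{[a,b]^d}(f(y)-\mathcal N^\theta(y))^2p(y)\,\lambda(\mathrm{d}y)$. Let $\mathfrak R_r\in C^1(\mathbb{R},\mathbb{R})$, $r\in\mathbb{N}$, satisfy for all $x\in\mathbb{R}$ that $\lim_{r\to\infty}\big(|\mathfrak R_r(x)-\max\{x,0\}|+|(\mathfrak R_r)'(x)-\mathbb 1_{(0,\infty)}(x)|\big)=0$ and $\sup_{r\in\mathbb{N}}\sup_{y\in[-|x|,|x|]}|(\mathfrak R_r)'(y)|<\infty$, and let $\mathfrak L_r(\theta)=\int_{[a,b]^d}\big(f(y)-c^\theta-\sum_{i=1}^H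 v^\theta_i\,\mathfrak R_r(b^\theta_i+\sum_{j=1}^d w^\theta_{i,j}y_j)\big)^2p(y)\,\lambda(\mathrm{d}y)$. Let $\mathcal G=(\mathcal G_1,\dots,\mathcal G_{\mathfrak d})\colon\mathbb{R}^{\mathfrak d}\to\mathbb{R}^{\mathfrak d}$ satisfy $\mathcal G(\theta)=\lim_{r\to\infty}(\nabla\mathfrak L_r)(\theta)$ for every $\theta$ at which this limit exists. For $\theta\in\mathbb{R}^{\mathfrak d}$, $i\in\{1,\dots,H\}$ let $I_i^\theta=\{x\in[a,b]^d\colon b^\theta_i+\sum_{j=1}^d w^\theta_{i,j}x_j>0\}$ and let $\mathbf D^\theta=\{i\in\{1,\dots,H\}\colon |b^\theta_i|+\sum_{j=1}^d|w^\theta_{i,j}|=0\}$ (the set of degenerate hidden neurons). For $\varepsilon>0$, $B_\varepsilon(\theta)=\{\vartheta\in\mathbb{R}^{\mathfrak d}\colon\|\theta-\vartheta\|<\varepsilon\}$. *)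

(* Defs.v *)
From HB Require Import structures.
From mathcomp Require Import all_boot all_order all_algebra.
From mathcomp Require Import all_classical all_reals all_analysis.
Set Implicit Arguments. Unset Strict Implicit. Unset Printing Implicit Defensive.
Import Order.TTheory GRing.Theory Num.Theory.
Local Open Scope classical_set_scope.
Local Open Scope ring_scope.

Section Defs.
Variable R : realType.

Definition npar (d H : nat) : nat := (d * H + 2 * H + 1)%N.

Definition eucl_dist (n : nat) (t s : n.-tuple R) : R :=
  Num.sqrt (\sum_(k < n) (tnth t k - tnth s k) ^+ 2).

Definition eucl_norm (n : nat) (t : n.-tuple R) : R :=
  Num.sqrt (\sum_(k < n) (tnth t k) ^+ 2).

Definition cube (d : nat) (a b : R) : set (d.-tuple R) :=
  [set x | forall j : 'I_d, a <= tnth x j <= b].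

Definition box (d : nat) (l u : d.-tuple R) : set (d.-tuple R) :=
  [set x | forall j : 'I_d, tnth l j <= tnth x j <= tnth u j].

(* mu is the Lebesgue measure on (the Borel sets of) R^d: it gives every
   closed box its volume (this determines mu uniquely) *)
Definition is_lebesgue (d : nat)
    (mu : {measure set (d.-tuple R) -> \bar R}) : Prop :=
  forall l u : d.-tuple R, (forall j : 'I_d, tnth l j <= tnth u j) ->
    mu (box l u) = (\prod_(j < d) (tnth u j - tnth l j))%:E.

(* coordinates of theta (0-based); indices below are always in range *)
Definition coord (n : nat) (th : n.-tuple R) (k : nat) : R := nth 0 th k.

(* 0-based versions: hidden neuron i : 'I_H, input coordinate j : 'I_d
   w^theta_{i+1,j+1} = theta_{i d + j + 1}  (1-based) = coord th (i*d + j) *)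
Definition wgt (d H : nat) (th : (npar d H).-tuple R) (i : 'I_H) (j : 'I_d) : R :=
  coord th (i * d + j)%N.
Definition bias (d H : nat) (th : (npar d H).-tuple R) (i : 'I_H) : R :=
  coord th (H * d + i)%N.
Definition outw (d H : nat) (th : (npar d H).-tuple R) (i : 'I_H) : R :=
  coord th (H * (d + 1) + i)%N.
Definition outb (d H : nat) (th : (npar d H).-tuple R) : R :=
  coord th (npar d H).-1.

Definition Iset (d H : nat) (a b : R) (th : (npar d H).-tuple R) (i : 'I_H)
  : set (d.-tuple R) :=
  [set x | cube a b x /\ 0 < bias th i + \sum_(j < d) wgt th i j * tnth x j].

Definition degenerate (d H : nat) (th : (npar d H).-tuple R) (i : 'I_H) : Prop :=
  `|bias th i| + \sum_(j < d) `|wgt th i j| = 0.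

Definition locally_lipschitz_on (n : nat) (U : set (n.-tuple R))
    (F : n.-tuple R -> R) : Prop :=
  forall th, U th -> exists eps : R, 0 < eps /\ exists L : R,
    forall th1 th2, U th1 -> U th2 -> eucl_dist th1 th < eps -> eucl_dist th2 th < eps ->
      `|F th1 - F th2| <= L * eucl_dist th1 th2.

End Defs.

(* Main.v *)
Require Import Defs.
From HB Require Import structures.
From mathcomp Require Import all_boot all_order all_algebra.
From mathcomp Require Import all_classical all_reals all_analysis.
From mathcomp Require Import finmap measurable_realfun.
From mathcomp.algebra_tactics Require Import ring lra.
Import Order.TTheory GRing.Theory Num.Theory.
Import numFieldNormedType.Exports.
Local Open Scope classical_set_scope.
Local Open Scope ring_scope.
Set Implicit Arguments. Unset Strict Implicit. Unset Printing Implicit Defensive.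



Section Dist.
Variable R : realType.

Lemma eucl_dist_ge0 n (t s : n.-tuple R) : 0 <= eucl_dist t s.
Proof. exact: sqrtr_ge0. Qed.

Lemma eucl_distC n (t s : n.-tuple R) : eucl_dist t s = eucl_dist s t.
Proof. by rewrite /eucl_dist; congr Num.sqrt; apply: eq_bigr => k _; rewrite -sqrrN opprB. Qed.

Lemma tnth_dist n (t s : n.-tuple R) k : `|tnth t k - tnth s k| <= eucl_dist t s.
Proof.
rewrite /eucl_dist -sqrtr_sqr; apply: ler_wsqrtr.
rewrite (bigD1 k) //= lerDl; apply: sumr_ge0 => i _; exact: sqr_ge0.
Qed.

Lemma coord_dist n (t s : n.-tuple R) k : `|Defs.coord t k - Defs.coord s k| <= eucl_dist t s.
Proof.
rewrite /Defs.coord; case: (ltnP k n) => hk.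
  have := tnth_dist t s (Ordinal hk); rewrite !(tnth_nth 0) //.
by rewrite !nth_default ?size_tuple // subrr normr0 eucl_dist_ge0.
Qed.

Lemma eucl_dist0 n (t s : n.-tuple R) : eucl_dist t s = 0 -> t = s.
Proof.
move=> h; apply: eq_from_tnth => k; apply/eqP; rewrite -subr_eq0 -normr_eq0.
by rewrite eq_le normr_ge0 andbT -h tnth_dist.
Qed.

Lemma eucl_norm_le n (t : n.-tuple R) : eucl_norm t <= \sum_(k < n) `|tnth t k|.
Proof.
set S := \sum_(k < n) `|tnth t k|.
have S0 : 0 <= S by apply: sumr_ge0.
rewrite /eucl_norm -(ger0_norm S0) -sqrtr_sqr; apply: ler_wsqrtr.
rewrite expr2 mulr_suml; apply: ler_sum => k _.
rewrite -[tnth t k ^+ 2]ger0_norm ?sqr_ge0 // normrX expr2 ler_wpM2l //.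
by rewrite /S (bigD1 k) //= lerDl sumr_ge0.
Qed.

Lemma eucl_norm_near n (t s : n.-tuple R) :
  eucl_dist t s <= 1 -> eucl_norm t <= \sum_(k < n) `|tnth s k| + n%:R.
Proof.
move=> h; apply: (le_trans (eucl_norm_le t)).
have -> : n%:R = \sum_(k < n) (1:R) by rewrite sumr_const card_ord.
rewrite -big_split /=.
apply: ler_sum => k _.
have := tnth_dist t s k => h2.
have : `|tnth t k| <= `|tnth s k| + `|tnth t k - tnth s k|.
  by rewrite -[X in `|X| <= _](subrK (tnth s k)) addrC ler_normD.
move=> h3; apply: (le_trans h3); rewrite lerD2l; exact: le_trans h2 h.
Qed.
End Dist.


Section Cover.
Variable R : realType.
Variable d : nat.
Variables a b : R.

Lemma cube_cover (e : d.-tuple R -> R) : (0 < d)%N ->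
  (forall x, cube a b x -> 0 < e x) ->
  exists s : seq (d.-tuple R), (forall y, y \in s -> cube a b y) /\
    forall x, cube a b x -> exists2 y, y \in s & eucl_dist x y < e y.
Proof.
move=> d0 e0.
pose t2r (x : d.-tuple R) : 'rV[R]_d := \row_i tnth x i.
pose r2t (v : 'rV[R]_d) : d.-tuple R := [tuple v ord0 i | i < d].
have K : compact [set v : 'rV[R]_d | forall i, `[a, b]%classic (v ord0 i)].
  by apply: (@rV_compact R d (fun _ => `[a, b]%classic)) => _; exact: segment_compact.
rewrite compact_cover in K.
pose rad y := e y / (2 * d%:R).
have := K (d.-tuple R) (cube a b) (fun y => ball (t2r y) (rad y)).
case.
- by move=> i _; exact: ball_open.
- move=> v Kv; exists (r2t v).
    move=> j; rewrite tnth_mktuple; have := Kv j; by rewrite /= in_itv.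
  have -> : t2r (r2t v) = v by apply/rowP => i; rewrite !mxE tnth_mktuple ord1.
  apply: ballxx; rewrite /rad divr_gt0 // ?e0 //.
    move=> j; rewrite tnth_mktuple; have := Kv j; by rewrite /= in_itv.
  by rewrite mulr_gt0 // ltr0n.
move=> D' sD cov; exists (finmap.enum_fset D'); split.
  move=> y yD; have : y \in D' by exact: yD.
  by move=> /sD /set_mem.
move=> x cx.
have : [set v : 'rV[R]_d | forall i, `[a, b]%classic (v ord0 i)] (t2r x).
  by move=> i; rewrite /= mxE in_itv /=; exact: cx.
case/cov => y /= yD hb; exists y => //.
have ey : 0 < e y by apply: e0; exact: (set_mem (sD _ yD)).
have hi : forall i, `|tnth x i - tnth y i| < rad y.
  move=> i; move: hb; rewrite -ball_normE /ball_ /= => hb.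
  apply: le_lt_trans hb.
  have -> : tnth x i - tnth y i = - ((t2r y - t2r x) ord0 i) by rewrite !mxE opprB.
  rewrite normrN [X in _ <= X]/Num.norm /= mx_normrE.
  by apply/bigmax_geP; right; exists (ord0, i).
rewrite /eucl_dist.
have dpos : 0 < d%:R :> R by rewrite ltr0n.
rewrite -[e y]ger0_norm ?(ltW ey) // -sqrtr_sqr ltr_sqrt ?exprn_gt0 ?normr_gt0 ?gt_eqF //.
apply: (@le_lt_trans _ _ (\sum_(k < d) rad y ^+ 2)).
  apply: ler_sum => k _; rewrite -real_normK ?num_real //.
  rewrite lerXn2r ?nnegrE ?normr_ge0 //; last exact: ltW (hi k).
  by rewrite /rad divr_ge0 // ?ltW // mulr_gt0.
rewrite sumr_const card_ord /rad.
have d1 : 1 <= d%:R :> R by rewrite ler1n.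
have -> : (e y / (2 * d%:R)) ^+ 2 *+ d = e y ^+ 2 / (4 * d%:R).
  rewrite -mulr_natr; field; lra.
rewrite ltr_pdivrMr; last lra.
have : 0 < e y ^+ 2 by rewrite exprn_gt0.
nra.
Qed.

Lemma unif_bound (n : nat) (phi : n.-tuple R * d.-tuple R -> R) th : (0 < d)%N ->
  (forall x, cube a b x -> exists eps : R, 0 < eps /\ exists M : R,
     forall th' x', cube a b x' -> eucl_dist th' th < eps -> eucl_dist x' x < eps ->
       `|phi (th', x')| <= M) ->
  exists eps : R, 0 < eps /\ exists M : R,
     forall th' x', cube a b x' -> eucl_dist th' th < eps -> `|phi (th', x')| <= M.
Proof.
move=> d0 hloc.
have : forall x, exists em : R * R, cube a b x -> 0 < em.1 /\
     forall th' x', cube a b x' -> eucl_dist th' th < em.1 -> eucl_dist x' x < em.1 ->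
       `|phi (th', x')| <= em.2.
  move=> x; have [cx|ncx] := pselect (cube a b x).
    have [eps [e0 [M hM]]] := hloc x cx; by exists (eps, M).
  by exists (0, 0).
case/choice => f hf.
have [s [sc scov]] := cube_cover (e:=fun y => (f y).1) d0 (fun x cx => (hf x cx).1).
exists (\big[Num.min/1]_(y <- s) (f y).1); split.
  rewrite big_seq; apply: (big_ind (fun m : R => 0 < m)) => //; first by move=> u v u0 v0; rewrite lt_min u0.
  by move=> y ys; exact: (hf y (sc y ys)).1.
exists (\big[Num.max/0]_(y <- s) (f y).2) => th' x' cx' hth.
have [y ys hy] := scov x' cx'.
apply: (le_trans ((hf y (sc y ys)).2 th' x' cx' _ hy)).
  apply: (lt_le_trans hth).
  by apply: (ge_bigmin_seq _ y) => //.
by apply: (le_bigmax_seq _ y) => //.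
Qed.
End Cover.



Section Meas.
Variable R : realType.
Variable d : nat.

Lemma box_measurable (l u : d.-tuple R) : measurable (box l u).
Proof.
have -> : box l u = \bigcap_(j in [set: 'I_d]) ((fun x : d.-tuple R => tnth x j) @^-1` `[tnth l j, tnth u j]%classic).
  by apply/seteqP; split => x /= h j; [move=> _; rewrite /= in_itv /=; exact: h | have := h j I; rewrite /= in_itv].
apply: fin_bigcap_measurable => // j _.
by rewrite -[X in measurable X]setTI; apply: measurable_tnth => //; exact: measurable_itv.
Qed.

Lemma cube_box (a b : R) : (cube a b : set (d.-tuple R)) = box [tuple a | i < d] [tuple b | i < d].
Proof. by apply/seteqP; split => x /= h j; rewrite ?tnth_mktuple; have := h j; rewrite ?tnth_mktuple. Qed.

Lemma cube_measurable (a b : R) : measurable (cube a b : set (d.-tuple R)).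
Proof. rewrite cube_box; exact: box_measurable. Qed.

Lemma lin_measurable (c : R) (w : 'I_d -> R) :
  measurable_fun setT (fun x : d.-tuple R => c + \sum_(j < d) w j * tnth x j).
Proof.
apply: measurable_funD => //; apply: measurable_sum => j.
by apply: measurable_funM => //; exact: measurable_tnth.
Qed.

Lemma pos_measurable (a b c : R) (w : 'I_d -> R) :
  measurable [set x | cube a b x /\ 0 < c + \sum_(j < d) w j * tnth x j].
Proof.
have -> : [set x | cube a b x /\ 0 < c + \sum_(j < d) w j * tnth x j] =
  cube a b `&` ((fun x : d.-tuple R => c + \sum_(j < d) w j * tnth x j) @^-1` `]0, +oo[%classic).
  by apply/seteqP; split => x /= [h1 h2]; split => //; move: h2; rewrite in_itv /= andbT.
apply: measurableI; first exact: cube_measurable.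
by rewrite -[X in measurable X]setTI; apply: lin_measurable => //; exact: measurable_itv.
Qed.

End Meas.



Section Integ.
Variable R : realType.
Variable d : nat.
Variables a b : R.
Hypothesis ab : a < b.
Variable mu : {measure set (d.-tuple R) -> \bar R}.
Hypothesis hleb : is_lebesgue mu.

Lemma mu_cube : mu (cube a b) = ((b - a) ^+ d)%:E.
Proof.
rewrite cube_box hleb; last by move=> j; rewrite !tnth_mktuple ltW.
congr EFin; rewrite -[in RHS](card_ord d) -prodr_const; apply: eq_bigr => j _.
by rewrite !tnth_mktuple.
Qed.

Lemma mu_sub_cube (D : set (d.-tuple R)) : measurable D -> D `<=` cube a b ->
  (mu D <= ((b - a) ^+ d)%:E)%E.
Proof.
move=> mD sD; rewrite -mu_cube; apply: le_measure => //; apply/mem_set => //. exact: cube_measurable.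
Qed.

Lemma fine_mu_sub (D : set (d.-tuple R)) : measurable D -> D `<=` cube a b ->
  0 <= fine (mu D) <= (b - a) ^+ d /\ (mu D < +oo)%E.
Proof.
move=> mD sD; have h := mu_sub_cube mD sD.
have fin : mu D \is a fin_num.
  by rewrite ge0_fin_numE // (le_lt_trans h) // ltey.
split; last by rewrite (le_lt_trans h) // ltey.
by rewrite fine_ge0 //= -lee_fin fineK.
Qed.

Lemma int_bound (D : set (d.-tuple R)) (g : d.-tuple R -> R) (K : R) :
  measurable D -> D `<=` cube a b -> measurable_fun D g -> 0 <= K ->
  (forall x, D x -> `|g x| <= K) ->
  mu.-integrable D (EFin \o g) /\ `|Rintegral mu D g| <= K * (b - a) ^+ d.
Proof.
move=> mD sD mg K0 hg.
have [/andP[f0 f1] finD] := fine_mu_sub mD sD.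
have fin : mu D \is a fin_num by rewrite ge0_fin_numE.
have mg' : measurable_fun D (EFin \o g) by exact/measurable_EFinP.
have hb : (\int[mu]_(x in D) `|(EFin \o g) x| <= K%:E * mu D)%E.
  apply: integral_le_bound => //; apply: aeW => x Dx /=.
  by rewrite lee_fin hg.
have ig : mu.-integrable D (EFin \o g).
  apply/integrableP; split => //; apply: (le_lt_trans hb).
  by rewrite -(fineK fin) -EFinM ltey.
split => //.
rewrite -lee_fin EFin_normr_Rintegral //.
apply: le_trans (le_abse_integral _ _ _) _ => //.
apply: (le_trans hb); rewrite -(fineK fin) -EFinM lee_fin.
by rewrite ler_wpM2l.
Qed.

End Integ.



Lemma clamp_trunc (R : realType) (M : nat) (t : R) : 0 <= t <= M.+1%:R ->
  (minn (Num.truncn t) M <= M)%N /\ (minn (Num.truncn t) M)%:R <= t <= (minn (Num.truncn t) M)%:R + 1.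
Proof.
move=> /andP[t0 tM]; split; first exact: geq_minr.
have [h1 h2] : (Num.truncn t)%:R <= t /\ t < (Num.truncn t).+1%:R.
  by have /andP[] := truncn_itv t0.
case: (leqP (Num.truncn t) M) => hM.
  rewrite h1 /=; rewrite -natr1 in h2; exact: ltW.
apply/andP; split.
  by apply: le_trans h1; rewrite ler_nat ltnW.
by rewrite natr1.
Qed.

Section Slab.
Variable R : realType.
Variable d : nat.
Variables a b : R.
Hypothesis ab : a < b.
Variable mu : {measure set (d.-tuple R) -> \bar R}.
Hypothesis hleb : is_lebesgue mu.
Hypothesis d0 : (0 < d)%N.

Lemma slab (w : 'I_d -> R) (c eta : R) (j : 'I_d) (X : set (d.-tuple R)) :
  0 < eta -> 0 < `|w j| -> measurable X ->
  X `<=` [set x | cube a b x /\ `|c + \sum_(k < d) w k * tnth x k| <= eta] ->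
  (mu X <= (4 * eta * (b - a) ^+ d.-1 / `|w j|)%:E)%E.
Proof.
move=> eta0 wj0 mX sX.
have wjn0 : w j != 0 by rewrite -normr_gt0.
set S := \sum_(k < d) `|w k|.
have S0 : 0 <= S by apply: sumr_ge0.
set M := Num.truncn (S * (b - a) / eta).
set N := M.+1.
have N0 : 0 < N%:R :> R by rewrite ltr0n.
set h := (b - a) / N%:R.
have h0 : 0 < h by rewrite divr_gt0 // subr_gt0.
have Sh : S * h <= eta.
  have := truncnS_gt (S * (b - a) / eta); rewrite -/M -/N => hN.
  rewrite /h mulrA ler_pdivrMr //; rewrite ltr_pdivrMr // in hN.
  by rewrite [eta * _]mulrC ltW.
set r := 2 * eta / `|w j|.
have r0 : 0 < r by rewrite divr_gt0 // mulr_gt0.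
set rho := 2 * r / N%:R.
have rho0 : 0 < rho by rewrite divr_gt0 // mulr_gt0.
pose I := {ffun 'I_d -> 'I_N}.
pose m (s : I) := - (c + \sum_(k < d | k != j) w k * (a + (s k)%:R * h)) / w j.
pose lo (s : I) := [tuple (if k == j then m s - r + (s k)%:R * rho else a + (s k)%:R * h) | k < d].
pose up (s : I) := [tuple (if k == j then m s - r + (s k)%:R * rho + rho else a + (s k)%:R * h + h) | k < d].
pose s0 : I := [ffun => ord0].
pose F (i : nat) := box (lo (nth s0 (enum I) i)) (up (nth s0 (enum I) i)).
have muF : forall s : I, mu (box (lo s) (up s)) = (rho * h ^+ d.-1)%:E.
  move=> s; rewrite hleb; last first.
    move=> k; rewrite !tnth_mktuple; case: (k == j); rewrite lerDl ltW //.
  congr EFin; rewrite (bigD1 j) //= !tnth_mktuple eqxx addrAC subrr add0r.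
  congr (_ * _).
  rewrite (eq_bigr (fun _ => h)); last first.
    by move=> k /negbTE hk; rewrite !tnth_mktuple hk addrAC subrr add0r.
  by rewrite prodr_const cardC1 card_ord.
have hN : h * N%:R = b - a by rewrite /h mulfVK // gt_eqF.
pose cl (u : R) : 'I_N := inord (minn (Num.truncn u) M).
have clP : forall u, 0 <= u <= N%:R -> (cl u)%:R <= u <= (cl u)%:R + 1.
  move=> u hu; have [hle hh] := clamp_trunc hu.
  by rewrite /cl inordK // ltnS.
have sc : forall (u : nat) (v z : R), 0 < z -> u%:R <= v <= u%:R + 1 ->
    u%:R * z <= v * z <= u%:R * z + z.
  move=> u v z z0 /andP[h1 h2]; rewrite ler_pM2r // h1 /=.
  by rewrite -[X in _ <= _ + X]mul1r -mulrDl ler_pM2r.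
apply: (le_trans (content_subadditive mu (n:=#|I|) (F:=F) _ mX _)).
- by move=> k _; exact: box_measurable.
- move=> x Xx; have [cx hx] := sX x Xx.
  rewrite -bigcup_mkord.
  pose t k := (tnth x k - a) / h.
  have tk : forall k, 0 <= t k <= N%:R.
    move=> k; have /andP[xa xb] := cx k.
    have u : (tnth x k - a) / h <= N%:R by rewrite ler_pdivrMr // mulrC hN lerD2r.
    by apply/andP; split; [apply: divr_ge0; [rewrite subr_ge0 | exact: ltW] | exact: u].
  pose s1 : I := [ffun k => cl (t k)].
  have hs1 : forall k, a + (s1 k)%:R * h <= tnth x k <= a + (s1 k)%:R * h + h.
    move=> k; have := sc _ _ _ h0 (clP _ (tk k)).
    rewrite /t divfK ?gt_eqF // ffunE => /andP[u1 u2].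
    by rewrite -lerBrDl u1 /= -addrA -lerBlDl.
  pose l k := a + (s1 k)%:R * h.
  have e1 : w j * (tnth x j - m s1) =
      (c + \sum_(k < d) w k * tnth x k) - \sum_(k < d | k != j) w k * (tnth x k - l k).
    rewrite (bigD1 j) //=.
    have -> : \sum_(k < d | k != j) w k * (tnth x k - l k) =
        \sum_(k < d | k != j) w k * tnth x k - \sum_(k < d | k != j) w k * l k.
      by rewrite -sumrB; apply: eq_bigr => k _; rewrite mulrBr.
    rewrite /m /l; field; exact: wjn0.
  have e2 : `|\sum_(k < d | k != j) w k * (tnth x k - l k)| <= eta.
    apply: (le_trans (ler_norm_sum _ _ _)).
    apply: (le_trans (y := \sum_(k < d | k != j) `|w k| * h)).
      apply: ler_sum => k _; rewrite normrM ler_wpM2l //.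
      have /andP[u1 u2] := hs1 k.
      rewrite ger0_norm ?subr_ge0 // lerBlDl; exact: u2.
    rewrite -mulr_suml; apply: le_trans Sh; apply: ler_wpM2r; first exact: ltW h0.
    by rewrite /S [X in _ <= X](bigD1 j) //= lerDr.
  have xm : `|tnth x j - m s1| <= r.
    rewrite /r ler_pdivlMr // mulrC -normrM e1.
    apply: (le_trans (ler_normB _ _)); rewrite mulr2n mulrDl mul1r.
    exact: lerD.
  pose tj := (tnth x j - (m s1 - r)) / rho.
  have tj0 : 0 <= tj <= N%:R.
    move: xm; rewrite ler_norml => /andP[u1 u2].
    have Nrho : N%:R * rho = 2 * r by rewrite /rho mulrC divfK ?gt_eqF.
    apply/andP; split; first by apply: divr_ge0; [lra | exact: ltW].
    rewrite ler_pdivrMr // Nrho; lra.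
  pose s2 : I := [ffun k => if k == j then cl tj else s1 k].
  have ms : m s2 = m s1.
    rewrite /m; congr (- (c + _) / _); apply: eq_bigr => k /negbTE kj.
    by rewrite /s2 ffunE kj.
  have Is2 : s2 \in enum I by rewrite mem_enum.
  exists (index s2 (enum I)); first by rewrite /= cardE index_mem.
  rewrite /F nth_index // => k; rewrite !tnth_mktuple.
  case: (eqVneq k j) => [->|kj].
    rewrite ms /s2 ffunE eqxx.
    have := sc _ _ _ rho0 (clP _ tj0).
    rewrite /tj divfK ?gt_eqF // => /andP[u1 u2].
    apply/andP; split; lra.
  rewrite /s2 ffunE (negbTE kj); exact: hs1.
- rewrite (eq_bigr (fun _ => (rho * h ^+ d.-1)%:E)); last by move=> k _; exact: muF.
  rewrite sumEFin lee_fin sumr_const card_ord card_ffun !card_ord -[_ *+ _]mulr_natl natrX.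
  rewrite -[in X in X * _](prednK d0) exprS.
  rewrite le_eqVlt; apply/orP; left; apply/eqP.
  rewrite /rho /r /h expr_div_n; field.
  by rewrite gt_eqF // expf_neq0 ?gt_eqF.
Qed.
End Slab.



Section Aux.
Variable R : realType.
Variable d : nat.

Lemma Rint_split (mu : {measure set (d.-tuple R) -> \bar R}) (D E : set (d.-tuple R)) g :
  measurable D -> measurable E -> mu.-integrable D (EFin \o g) ->
  Rintegral mu D g = Rintegral mu (D `&` E) g + Rintegral mu (D `\` E) g.
Proof.
move=> mD mE ig.
have eD : D = (D `&` E) `|` (D `\` E).
  apply/seteqP; split => x.
    by move=> Dx; have [Ex|nEx] := pselect (E x); [left | right].
  by case=> -[].
rewrite {1}eD Rintegral_setU //; first exact: measurableI.
- exact: measurableD.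
- by rewrite -eD.
- by apply/disj_setPS => x [[_ ?] [_ ?]].
Qed.

Lemma int_bound_mu (mu : {measure set (d.-tuple R) -> \bar R}) (D : set (d.-tuple R)) (g : d.-tuple R -> R) (K : R) :
  measurable D -> (mu D < +oo)%E -> measurable_fun D g -> 0 <= K ->
  (forall x, D x -> `|g x| <= K) ->
  mu.-integrable D (EFin \o g) /\ `|Rintegral mu D g| <= K * fine (mu D).
Proof.
move=> mD finD mg K0 hg.
have fin : mu D \is a fin_num by rewrite ge0_fin_numE.
have mg' : measurable_fun D (EFin \o g) by exact/measurable_EFinP.
have hb : (\int[mu]_(x in D) `|(EFin \o g) x| <= K%:E * mu D)%E.
  apply: integral_le_bound => //; apply: aeW => x Dx /=.
  by rewrite lee_fin hg.
have ig : mu.-integrable D (EFin \o g).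
  apply/integrableP; split => //; apply: (le_lt_trans hb).
  by rewrite -(fineK fin) -EFinM ltey.
split => //.
rewrite -lee_fin EFin_normr_Rintegral //.
apply: le_trans (le_abse_integral _ _ _) _ => //.
by apply: (le_trans hb); rewrite -(fineK fin) -EFinM lee_fin.
Qed.

Lemma section_measurable n (a b : R) (phi : n.-tuple R * d.-tuple R -> R) th :
  measurable_fun (setT `*` cube a b) phi -> measurable_fun (cube a b) (fun x => phi (th, x)).
Proof.
move=> mphi mC Y mY.
have mA := mphi (measurableX measurableT mC) Y mY.
have := measurable_xsection th mA.
congr measurable; apply/seteqP; split => x /=.
  by rewrite /xsection /= in_setE => -[[_ cx] hy].
by move=> -[cx hy]; rewrite /xsection /= in_setE.
Qed.

End Aux.



Lemma zdiff (R : realType) d H (a b : R) (t s : (npar d H).-tuple R) i (x : d.-tuple R) :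
  cube a b x ->
  `|(bias t i + \sum_(j < d) wgt t i j * tnth x j) - (bias s i + \sum_(j < d) wgt s i j * tnth x j)|
    <= (1 + d%:R * (`|a| + `|b|)) * eucl_dist t s.
Proof.
move=> cx.
have xB : forall j, `|tnth x j| <= `|a| + `|b|.
  move=> j; have /andP[h1 h2] : a <= tnth x j <= b by exact: cx j.
  have h3 := ler_norm (- a); rewrite normrN in h3.
  have h4 := ler_norm b; have h5 := normr_ge0 a; have h6 := normr_ge0 b.
  rewrite ler_norml; apply/andP; split; lra.
rewrite opprD addrACA -sumrB.
apply: le_trans (ler_normD _ _) _.
rewrite mulrDl mul1r; apply: lerD; first exact: coord_dist.
apply: le_trans (ler_norm_sum _ _ _) _.
apply: (le_trans (y := \sum_(j < d) ((`|a| + `|b|) * eucl_dist t s))).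
  apply: ler_sum => j _; rewrite -mulrBl normrM mulrC.
  by apply: ler_pM; [exact: normr_ge0 | exact: normr_ge0 | exact: xB | exact: coord_dist].
by rewrite sumr_const card_ord mulr_natl mulrnAl.
Qed.

Lemma absltP (R : realType) (x y : R) : `|x| < y -> - y < x /\ x < y.
Proof. by rewrite ltr_norml => /andP[]. Qed.

Lemma Iset_measurable (R : realType) d H (a b : R) (th : (npar d H).-tuple R) i :
  measurable (Iset a b th i).
Proof. exact: (pos_measurable a b (bias th i) (wgt th i)). Qed.

Lemma Iset_cube (R : realType) d H (a b : R) (th : (npar d H).-tuple R) i :
  Iset a b th i `<=` cube a b.
Proof. by move=> x []. Qed.

Lemma sdiff_bound (R : realType) d H (a b : R) (mu : {measure set (d.-tuple R) -> \bar R})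
  (i : 'I_H) (th : (npar d H).-tuple R) :
  (0 < d)%N -> a < b -> is_lebesgue mu -> ~ degenerate th i ->
  exists epsI : R, 0 < epsI /\ exists C : R, 0 <= C /\ forall th1 th2,
    eucl_dist th1 th < epsI -> eucl_dist th2 th < epsI ->
    (mu (Iset a b th1 i `\` Iset a b th2 i) <= (C * eucl_dist th1 th2)%:E)%E.
Proof.
move=> d0 ab hleb ndeg.
set B1 := 1 + d%:R * (`|a| + `|b|).
have B10 : 0 < B1.
  have : 0 <= d%:R * (`|a| + `|b|) :> R by rewrite mulr_ge0 // addr_ge0.
  rewrite /B1; lra.
have [[j wj]|allz] : (exists j, wgt th i j != 0) \/ (forall j, wgt th i j = 0).
  case: (pselect (exists j, wgt th i j != 0)) => [h|h]; [by left | right => j].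
  by apply/eqP; apply/negPn/negP => hj; apply: h; exists j.
- set w0 := `|wgt th i j|.
  have w00 : 0 < w0 by rewrite normr_gt0.
  exists (w0 / 2); split; first by rewrite divr_gt0.
  exists (4 * B1 * (b - a) ^+ d.-1 / (w0 / 2)); split.
    by rewrite divr_ge0 ?mulr_ge0 ?exprn_ge0 ?subr_ge0 ?ltW // ?divr_gt0.
  move=> th1 th2 h1 h2.
  have wj1 : w0 / 2 <= `|wgt th1 i j|.
    have t1 := ler_normD (wgt th1 i j) (wgt th i j - wgt th1 i j).
    rewrite addrC subrK distrC in t1.
    have t2 := coord_dist th1 th (i * d + j).
    rewrite /wgt -/(wgt th1 i j) -/(wgt th i j) in t2.
    rewrite -/w0 in t1; lra.
  have [δ0 | δn0] := eqVneq (eucl_dist th1 th2) 0.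
    by rewrite δ0 mulr0 (eucl_dist0 δ0) setDv measure0.
  have δ0 : 0 < eucl_dist th1 th2 by rewrite lt0r δn0 eucl_dist_ge0.
  have w1 : 0 < `|wgt th1 i j| by apply: lt_le_trans wj1; rewrite divr_gt0.
  have incl : Iset a b th1 i `\` Iset a b th2 i `<=`
      [set x | cube a b x /\ `|bias th1 i + \sum_(k < d) wgt th1 i k * tnth x k| <= B1 * eucl_dist th1 th2].
    move=> x [[cx z1] n2]; split => //.
    have z2 : bias th2 i + \sum_(k < d) wgt th2 i k * tnth x k <= 0.
      by rewrite leNgt; apply/negP => hz; apply: n2.
    have := zdiff th1 th2 i cx; rewrite -/B1 => hz.
    rewrite (ger0_norm (ltW z1)).
    apply: le_trans hz; rewrite ler_normr; apply/orP; left; lra.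
  have hs := slab ab hleb d0 (w := wgt th1 i) (c := bias th1 i) (eta := B1 * eucl_dist th1 th2)
    (mulr_gt0 B10 δ0) w1 (measurableD (Iset_measurable a b th1 i) (Iset_measurable a b th2 i)) incl.
  apply: (le_trans hs); rewrite lee_fin.
  set Q := 4 * B1 * (b - a) ^+ d.-1 * eucl_dist th1 th2.
  have Q0 : 0 <= Q by rewrite /Q !mulr_ge0 ?exprn_ge0 ?subr_ge0 ?ltW // eucl_dist_ge0.
  have -> : 4 * (B1 * eucl_dist th1 th2) * (b - a) ^+ d.-1 / `|wgt th1 i j| = Q / `|wgt th1 i j|.
    by rewrite /Q; congr (_ / _); ring.
  have -> : 4 * B1 * (b - a) ^+ d.-1 / (w0 / 2) * eucl_dist th1 th2 = Q / (w0 / 2).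
    by rewrite /Q mulrAC.
  by apply: ler_wpM2l => //; rewrite lef_pV2 ?posrE ?divr_gt0.
- have b0 : bias th i != 0.
    apply/negP => /eqP hb; apply: ndeg; rewrite /degenerate hb normr0 add0r.
    by apply: big1 => k _; rewrite allz normr0.
  set c0 := `|bias th i|.
  have c00 : 0 < c0 by rewrite normr_gt0.
  exists (c0 / (2 * B1)); split; first by rewrite divr_gt0 // mulr_gt0.
  exists 0; split => // th1 th2 h1 h2.
  have zc : forall t x, cube a b x -> eucl_dist t th < c0 / (2 * B1) ->
      `|(bias t i + \sum_(k < d) wgt t i k * tnth x k) - bias th i| < c0 / 2.
    move=> t x cx ht; have := zdiff t th i cx; rewrite -/B1.
    have Z : \sum_(k < d) wgt th i k * tnth x k = 0.
      by rewrite big1 // => k _; rewrite allz mul0r.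
    rewrite Z addr0 => hz; apply: (le_lt_trans hz).
    rewrite ltr_pdivlMr // mulrC; rewrite ltr_pdivlMr ?mulr_gt0 // in ht.
    by rewrite mulrA mulrC.
  have -> : Iset a b th1 i `\` Iset a b th2 i = set0.
    apply/seteqP; split => // x [[cx z1] n2]; apply: n2; split => //.
    have u1 := zc th1 x cx h1; have u2 := zc th2 x cx h2.
    move: u1 u2; rewrite /c0; case: (ltrgt0P (bias th i)) => hb.
    - move=> /absltP[u1 u1'] /absltP[u2 u2']; lra.
    - move=> /absltP[u1 u1'] /absltP[u2 u2']; lra.
    - by move: b0; rewrite hb eqxx.
  by rewrite measure0 mul0r.
Qed.

Unset Implicit Arguments.
Theorem corollary2p6 (R : realType) (d H : nat) (a b : R)
    (mu : {measure set (d.-tuple R) -> \bar R})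
    (p : d.-tuple R -> R)
    (phi : (npar d H).-tuple R * d.-tuple R -> R) :
  (0 < d)%N -> (0 < H)%N -> a < b ->
  is_lebesgue mu ->
  measurable_fun (cube a b) p ->
  (forall x, cube a b x -> 0 <= p x) ->
  (exists M : R, forall x, cube a b x -> `|p x| <= M) ->
  (* phi is measurable *)
  measurable_fun (setT `*` cube a b) phi ->
  (* phi is locally bounded on R^dd x [a,b]^d *)
  (forall th x, cube a b x -> exists eps : R, 0 < eps /\ exists M : R,
     forall th' x', cube a b x' -> eucl_dist th' th < eps -> eucl_dist x' x < eps ->
       `|phi (th', x')| <= M) ->
  (* locally uniform Lipschitz condition in theta *)
  (forall r : R, 0 < r -> exists L : R,
     forall th vth, eucl_norm th + eucl_norm vth <= r -> th <> vth ->
       forall x, cube a b x ->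
         `|phi (th, x) - phi (vth, x)| <= L * eucl_dist th vth) ->
  locally_lipschitz_on setT
    (fun th => Rintegral mu (cube a b) (fun x => phi (th, x) * p x)) /\
  (forall i : 'I_H,
     locally_lipschitz_on [set th | ~ degenerate th i]
       (fun th => Rintegral mu (Iset a b th i) (fun x => phi (th, x) * p x))).
Proof.
move=> d0 H0 ab hleb mp p0 [Mp hMp] mphi hloc hlip.
pose Mq := `|Mp|.
have Mq0 : 0 <= Mq by exact: normr_ge0.
have hp : forall x, cube a b x -> `|p x| <= Mq.
  by move=> x cx; exact: le_trans (hMp x cx) (ler_norm Mp).
pose f (t : (npar d H).-tuple R) x := phi (t, x) * p x.
have mC : measurable (cube a b : set (d.-tuple R)) by exact: cube_measurable.
have mf : forall t D, measurable D -> D `<=` cube a b -> measurable_fun D (f t).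
  move=> t D mD sD; apply: measurable_funM.
    by apply: (measurable_funS mC) => //; exact: section_measurable.
  by apply: (measurable_funS mC) => //.
have loc : forall th, exists eps : R, 0 < eps /\ exists K1 K2 : R, 0 <= K1 /\ 0 <= K2 /\
   forall th1 th2 x, cube a b x -> eucl_dist th1 th < eps -> eucl_dist th2 th < eps ->
     `|f th1 x - f th2 x| <= K1 * eucl_dist th1 th2 /\ `|f th2 x| <= K2.
  move=> th.
  have [e1 [e10 [M1 hM1]]] := unif_bound (phi:=phi) (th:=th) d0 (hloc th).
  set r := 2 * (\sum_(k < npar d H) `|tnth th k| + (npar d H)%:R) + 1.
  have r0 : 0 < r.
    have : 0 <= \sum_(k < npar d H) `|tnth th k| by apply: sumr_ge0.
    have : 0 <= (npar d H)%:R :> R by [].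
    rewrite /r; lra.
  have [L hL] := hlip r r0.
  exists (Num.min e1 1); split; first by rewrite lt_min e10 ltr01.
  exists (`|L| * Mq), (`|M1| * Mq); split; first by rewrite mulr_ge0.
  split; first by rewrite mulr_ge0.
  move=> th1 th2 x cx h1 h2; move: h1 h2; rewrite !lt_min => /andP[h1 h1'] /andP[h2 h2'].
  split.
    rewrite /f -mulrBl normrM [_ * Mq]mulrC -mulrA [Mq * _]mulrC.
    apply: ler_pM; [exact: normr_ge0 | exact: normr_ge0 | | exact: hp].
    have [->|neq] := eqVneq th1 th2.
      by rewrite subrr normr0 mulr_ge0 // eucl_dist_ge0.
    have n1 := eucl_norm_near (ltW h1'); have n2 := eucl_norm_near (ltW h2').
    have hr : eucl_norm th1 + eucl_norm th2 <= r by rewrite /r; lra.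
    have neq' : th1 <> th2 by apply/eqP.
    apply: (le_trans (hL th1 th2 hr neq' x cx)).
    by apply: ler_wpM2r; [exact: eucl_dist_ge0 | exact: ler_norm].
  rewrite /f normrM; apply: ler_pM; [exact: normr_ge0 | exact: normr_ge0 | | exact: hp].
  exact: le_trans (hM1 th2 x cx h2) (ler_norm M1).
have intb : forall t D K, measurable D -> D `<=` cube a b ->
    (forall x, D x -> `|f t x| <= K) -> 0 <= K -> mu.-integrable D (EFin \o f t).
  by move=> t D K mD sD hK K0; have [] := int_bound ab hleb mD sD (mf t D mD sD) K0 hK.
split.
  move=> th _; have [eps [e0 [K1 [K2 [K10 [K20 hK]]]]]] := loc th.
  exists eps; split => //; exists (K1 * (b - a) ^+ d) => th1 th2 _ _ h1 h2.
  have i1 := intb th1 _ _ mC (@subset_refl _ _) (fun x cx => (hK th1 th1 x cx h1 h1).2) K20.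
  have i2 := intb th2 _ _ mC (@subset_refl _ _) (fun x cx => (hK th2 th2 x cx h2 h2).2) K20.
  rewrite -RintegralB //.
  have [_ hb] := int_bound ab hleb mC (@subset_refl _ _)
    (measurable_funB (mf th1 _ mC (@subset_refl _ _)) (mf th2 _ mC (@subset_refl _ _)))
    (mulr_ge0 K10 (eucl_dist_ge0 th1 th2)) (fun x cx => (hK th1 th2 x cx h1 h2).1).
  by apply: (le_trans hb); rewrite mulrAC.
move=> i th ndeg.
have [eps [e0 [K1 [K2 [K10 [K20 hK]]]]]] := loc th.
have [epsI [eI0 [C [C0 hC]]]] := sdiff_bound (mu:=mu) d0 ab hleb ndeg.
exists (Num.min eps epsI); split; first by rewrite lt_min e0 eI0.
exists (K1 * (b - a) ^+ d + 2 * K2 * C) => th1 th2 _ _.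
rewrite !lt_min => /andP[h1 h1'] /andP[h2 h2'].
set I1 := Iset a b th1 i; set I2 := Iset a b th2 i.
have mI1 : measurable I1 by exact: Iset_measurable.
have mI2 : measurable I2 by exact: Iset_measurable.
have sI1 : I1 `<=` cube a b by exact: Iset_cube.
have sI2 : I2 `<=` cube a b by exact: Iset_cube.
have b1 : forall x, I1 x -> `|f th1 x| <= K2 by move=> x /sI1 cx; exact: (hK th1 th1 x cx h1 h1).2.
have b2 : forall x, cube a b x -> `|f th2 x| <= K2 by move=> x cx; exact: (hK th2 th2 x cx h2 h2).2.
have i11 := intb th1 _ _ mI1 sI1 b1 K20.
have i12 := intb th2 _ _ mI1 sI1 (fun x Ix => b2 x (sI1 x Ix)) K20.
have i22 := intb th2 _ _ mI2 sI2 (fun x Ix => b2 x (sI2 x Ix)) K20.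
have -> : Rintegral mu I1 (fun x => phi (th1, x) * p x) - Rintegral mu I2 (fun x => phi (th2, x) * p x)
  = Rintegral mu I1 (fun x => f th1 x - f th2 x) +
    (Rintegral mu (I1 `\` I2) (f th2) - Rintegral mu (I2 `\` I1) (f th2)).
  rewrite RintegralB // (Rint_split (E := I2) mI1 mI2 i12) (Rint_split (E := I1) mI2 mI1 i22).
  rewrite setIC /f; ring.
have [_ hb1] := int_bound ab hleb mI1 sI1 (measurable_funB (mf th1 _ mI1 sI1) (mf th2 _ mI1 sI1))
    (mulr_ge0 K10 (eucl_dist_ge0 th1 th2)) (fun x Ix => (hK th1 th2 x (sI1 x Ix) h1 h2).1).
have bd : forall (A B : set (d.-tuple R)) t1 t2, measurable A -> measurable B ->
    A `<=` cube a b -> eucl_dist t1 th < epsI -> eucl_dist t2 th < epsI ->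
    A = Iset a b t1 i -> B = Iset a b t2 i ->
    `|Rintegral mu (A `\` B) (f th2)| <= K2 * (C * eucl_dist t1 t2).
  move=> A B t1 t2 mA mB sA ht1 ht2 eA eB.
  have mAB : measurable (A `\` B) by exact: measurableD.
  have sAB : A `\` B `<=` cube a b by move=> x [/sA].
  have [/andP[f0 f1] finAB] := fine_mu_sub ab hleb mAB sAB.
  have [_ hh] := int_bound_mu mAB finAB (mf th2 _ mAB sAB) K20 (fun x ABx => b2 x (sAB x ABx)).
  apply: (le_trans hh); apply: ler_wpM2l => //.
  have hc := hC t1 t2 ht1 ht2; rewrite -eA -eB in hc.
  have fin : mu (A `\` B) \is a fin_num by rewrite ge0_fin_numE.
  by rewrite -lee_fin (fineK fin).
have d1 := bd I1 I2 th1 th2 mI1 mI2 sI1 h1' h2' erefl erefl.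
have d2 := bd I2 I1 th2 th1 mI2 mI1 sI2 h2' h1' erefl erefl.
rewrite eucl_distC in d2.
set A1 := Rintegral mu I1 _ in hb1 *.
set A2 := Rintegral mu (I1 `\` I2) _ in d1 *.
set A3 := Rintegral mu (I2 `\` I1) _ in d2 *.
apply: (le_trans (ler_normD _ _)).
have := ler_normB A2 A3.
set D := eucl_dist th1 th2 in hb1 d1 d2 *.
set P := (b - a) ^+ d in hb1 *.
have : K1 * D * P = K1 * P * D by rewrite mulrAC.
have : K2 * (C * D) = K2 * C * D by rewrite mulrA.
move=> e1 e2 e3; rewrite mulrDl.
have : 2 * K2 * C * D = K2 * C * D + K2 * C * D by rewrite -!mulrA mulr2n mulrDl mul1r.
lra.
Qed.
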